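(* Let $q$ be a power of $2$ and let $\alpha,\beta \in \mathbb{F}_{q^2}$ be such that the line $\{(\alpha t+\beta, t): t\}$ is not tangent to the Hermitian curve $x^q+x=y^{q+1}$. Let $\gamma = \beta + \beta^q$, $p(t) = t^{q+1} + \alpha^q t^q + \alpha t + \gamma$, let $\sigma_0,\dots,\sigma_q$ be the (distinct) roots of $p(t)$, and for $k \geq 0$ let $P_k = \sum_{i=0}^q \sigma_i^k$. Then for every integer $k \geq 0$, $P_{k+1} = \alpha^q P_k$ if and only if the remainder of $t^k$ upon division by $p(t)$ in $\mathbb{F}_{q^2}[t]$ has degree strictly less than $q$.
   Context: The roots $\sigma_i$ lie in an algebraic closure of $\mathbb{F}_{q^2}$ (in fact in $\mathbb{F}_{q^2}$, being the $t$-coordinates of the $q+1$ intersection points of the non-tangent line with the curve). *)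

(* Defs.v *)
From HB Require Import structures.
From mathcomp Require Import all_boot all_order all_algebra all_field.
Set Implicit Arguments. Unset Strict Implicit. Unset Printing Implicit Defensive.
Import GRing.Theory.
Local Open Scope ring_scope.

Definition on_hermitian (F : fieldType) (q : nat) (x y : F) : Prop :=
  x ^+ q + x = y ^+ q.+1.

Definition on_line (F : fieldType) (alpha beta x y : F) : Prop :=
  x = alpha * y + beta.

(* The line is tangent to H at (x0,y0): the point is on both, and the direction
   vector (alpha, 1) of the line is annihilated by the gradient of
   H(x,y) = x^q + x - y^(q+1) at (x0,y0), namely
   (q x0^(q-1) + 1, -(q+1) y0^q). *)
Definition tangent_at (F : fieldType) (q : nat) (alpha beta x0 y0 : F) : Prop :=
  [/\ on_hermitian q x0 y0, on_line alpha beta x0 y0 &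
      alpha * (q%:R * x0 ^+ q.-1 + 1) + 1 * (- (q.+1%:R * y0 ^+ q)) = 0].

Definition line_tangent (F : fieldType) (q : nat) (alpha beta : F) : Prop :=
  exists x0 y0, tangent_at q alpha beta x0 y0.

Definition herm_poly (F : fieldType) (q : nat) (alpha beta : F) : {poly F} :=
  'X ^+ q.+1 + (alpha ^+ q) *: 'X ^+ q + alpha *: 'X + (beta + beta ^+ q)%:P.

Definition power_sum (F : fieldType) (q : nat) (sigma : 'I_q.+1 -> F) (k : nat) : F :=
  \sum_(i < q.+1) sigma i ^+ k.

(* Main.v *)
Require Import Defs.
From HB Require Import structures.
From mathcomp Require Import all_boot all_order all_algebra all_field.
From mathcomp Require Import ring.
Set Implicit Arguments. Unset Strict Implicit. Unset Printing Implicit Defensive.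
Import GRing.Theory.
Local Open Scope ring_scope.

Lemma main_aux (F : finFieldType) (n q : nat) (hq : q = (2 ^ n)%N)
  (hF : #|F| = (q ^ 2)%N) : [/\ 2 \in [pchar F], (0 < n)%N, q%:R = 0 :> F,
   forall x : F, x ^+ (q * q) = x & forall x y : F, (x + y) ^+ q = x ^+ q + y ^+ q].
Proof.
have h2 : 2 \in [pchar F].
  by apply: (@card_finPcharP _ 2 (n * 2)) => //; rewrite hF hq expnM.
have n0 : (0 < n)%N.
  move: hq; case: n => [|m] hq //; rewrite hq in hF.
  have : (#|F| <= 1)%N by rewrite hF.
  move/card_le1_eqP => H.
  by have := H 1 0 isT isT; move/eqP; rewrite eq_sym oner_eq0.

split => //.
- by rewrite hq natrX (pcharf0 h2) expr0n eqn0Ngt n0.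
- by move=> x; rewrite mulnn -hF expf_card.
- move=> x y; apply: exprDn_pchar.
  rewrite (eq_pnat _ (pcharf_eq h2)) hq pnatX; apply/orP; left.
  exact: pnat_id.
Qed.

Lemma coefq_eq0 (F : fieldType) (f : {poly F}) (q : nat) :
  (size f <= q.+1)%N -> (f`_q == 0) = (size f <= q)%N.
Proof.
move=> hs; case: (leqP (size f) q) => H.
  by rewrite nth_default ?eqxx.
have E : size f = q.+1 by apply/eqP; rewrite eqn_leq hs H.
have : lead_coef f != 0.
  by rewrite lead_coef_eq0 -size_poly_eq0 E.
by rewrite /lead_coef E => /negbTE.
Qed.
Lemma key (F : fieldType) (M : nat) (s : 'I_M.+1 -> F) (hinj : injective s)
  (p : {poly F}) (hsz : size p = M.+2) (hm : p \is monic)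
  (hr : forall i, root p (s i))
  (hw : forall i, (p %/ ('X - (s i)%:P)).[s i] != 0)
  (f : {poly F}) (hf : (size f <= M.+1)%N) :
  \sum_i f.[s i] / (p %/ ('X - (s i)%:P)).[s i] = f`_M.
Proof.
set h := fun i => p %/ ('X - (s i)%:P).
have hdiv i : h i * ('X - (s i)%:P) = p.
  by apply: divpK; rewrite -root_factor_theorem.
have hsize i : size (h i) = M.+1.
  by rewrite /h size_divp ?polyXsubC_eq0 // hsz size_XsubC.
have hlead i : (h i)`_M = 1.
  have := congr1 lead_coef (hdiv i).
  rewrite lead_coefM lead_coefXsubC mulr1 (monicP hm) /lead_coef hsize //.
have hz i j : i != j -> (h i).[s j] = 0.
  move=> ij; have := hr j; rewrite /root -(hdiv i) hornerM hornerXsubC mulf_eq0.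
  case/orP=> [/eqP //|]; rewrite subr_eq0 => /eqP/hinj E.
  by rewrite E eqxx in ij.
set g := \sum_i (f.[s i] / (h i).[s i]) *: h i.
have hg : (size g <= M.+1)%N.
  apply: (big_ind (fun r : {poly F} => (size r <= M.+1)%N)).
  - by rewrite size_poly0.
  - by move=> x y hx hy; apply: leq_trans (size_polyD _ _) _; rewrite geq_max hx hy.
  - by move=> i _; apply: leq_trans (size_scale_leq _ _) _; rewrite hsize.
have hgs j : g.[s j] = f.[s j].
  rewrite horner_sum (bigD1 j) //= big1 ?addr0.
    by rewrite hornerZ divfK //; apply: hw.
  by move=> i ij; rewrite hornerZ (hz i j ij) mulr0.
have gf : g = f.
  have [/eqP|nz] := eqVneq (g - f) 0; first by rewrite subr_eq0 => /eqP.
  exfalso.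
  have := max_poly_roots nz (rs := map s (enum 'I_M.+1)).
  rewrite size_map size_enum_ord map_inj_uniq ?enum_uniq //.
  have -> : all (root (g - f)) [seq s i | i <- enum 'I_M.+1].
    by apply/allP=> x /mapP [i _ ->]; rewrite /root hornerD hornerN hgs subrr.
  move=> /(_ isT isT) H.
  have H2 : (size (g - f)%R <= M.+1)%N.
    by apply: leq_trans (size_polyD _ _) _; rewrite geq_max hg size_polyN hf.
  by move: (leq_trans H H2); rewrite ltnn.
have -> : f`_M = g`_M by rewrite gf.
rewrite /g coef_sum; apply: eq_bigr => i _.
by rewrite coefZ hlead mulr1.
Qed.

Theorem mainTheorem4 (F : finFieldType) (n q : nat) (hq : q = (2 ^ n)%N)
  (hF : #|F| = (q ^ 2)%N) (alpha beta : F)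
  (hnt : ~ line_tangent q alpha beta)
  (sigma : 'I_q.+1 -> F) (hinj : injective sigma)
  (hroot : forall i, root (herm_poly q alpha beta) (sigma i)) (k : nat) :
  power_sum sigma k.+1 = alpha ^+ q * power_sum sigma k <->
  (size (modp ('X ^+ k) (herm_poly q alpha beta)) <= q)%N.
Proof.
have [h2 n0 hq0 hqq hfrob] := main_aux hq hF.
have q2 : (2 <= q)%N by rewrite hq -{1}(expn1 2) leq_exp2l.
set a := alpha ^+ q; set gamma := beta + beta ^+ q; set D := alpha * a - gamma.
set p := herm_poly q alpha beta.
have hq1 : q.+1%:R = 1 :> F by rewrite -addn1 natrD hq0 add0r.
have haa : a ^+ q = alpha by rewrite /a -exprM hqq.
have hD : D != 0.
  apply/eqP => D0; apply: hnt; exists (alpha * a + beta), a; split => //.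
  - rewrite /on_hermitian hfrob exprMn haa exprS haa.
    move/eqP: D0; rewrite subr_eq0 /gamma => /eqP D0.
    rewrite -/a (_ : a * alpha + beta ^+ q + (alpha * a + beta) =
       (alpha * a + alpha * a) + (beta + beta ^+ q)); last by ring.
    by rewrite addrr_pchar2 // add0r -D0 mulrC.
  - by rewrite hq0 mul0r add0r mulr1 hq1 mul1r haa mul1r subrr.
have hpe x : p.[x] = x ^+ q.+1 + a * x ^+ q + alpha * x + gamma.
  by rewrite /p /herm_poly !hornerE.
have hsz : size p = q.+2.
  rewrite /p /herm_poly -!addrA size_polyDl ?size_polyXn //.
  apply: leq_ltn_trans (size_polyD _ _) _; rewrite gtn_max.
  apply/andP; split.
    by apply: leq_ltn_trans (size_scale_leq _ _) _; rewrite size_polyXn.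
  apply: leq_ltn_trans (size_polyD _ _) _; rewrite gtn_max.
  apply/andP; split.
    apply: leq_ltn_trans (size_scale_leq _ _) _; rewrite size_polyX ltnS; exact: leqW q2.
  by apply: leq_ltn_trans (size_polyC_leq1 _) _.
have hm : p \is monic.
  rewrite monicE /lead_coef hsz /p /herm_poly !coefD coefXn eqxx coefZ coefXn.
  rewrite coefZ coefX coefC /= (gtn_eqF (ltnSn q)) !mulr0 !addr0; by rewrite eqSS (gtn_eqF (ltnW q2)) mulr0 addr0.
have hw i : (p %/ ('X - (sigma i)%:P)).[sigma i] * (sigma i + a) = D.
  set s := sigma i; set h := p %/ ('X - s%:P).
  have hdiv : h * ('X - s%:P) = p.
    by apply: divpK; rewrite -root_factor_theorem; exact: hroot.
  have : p^`().[s] = h.[s].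
    by rewrite -hdiv derivM derivXsubC mulr1 hornerD hornerM hornerXsubC subrr mulr0 add0r.
  move <-.
  rewrite /p /herm_poly !derivD !derivZ !derivXn derivX derivC !hornerE.
  rewrite !hornerMn !hornerXn /= -[_ *+ q.+1]mulr_natr -[_ *+ q]mulr_natr hq1 hq0 mulr1 !mulr0 addr0 -/a.
  have := hroot i; rewrite /root -/p hpe -/s => /eqP r0.
  apply/eqP; rewrite -subr_eq0 -r0 /D /gamma exprS.
  by apply/eqP; ring.
have hw0 i : (p %/ ('X - (sigma i)%:P)).[sigma i] != 0.
  by apply/eqP => E; move: (hw i); rewrite E mul0r => /esym/eqP; rewrite (negbTE hD).
set f := 'X^k %% p.
have hf : (size f <= q.+1)%N by rewrite -ltnS -hsz ltn_modp -size_poly_eq0 hsz.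
have hfs i : f.[sigma i] = sigma i ^+ k.
  have := congr1 (fun r => r.[sigma i]) (divp_eq ('X^k) p).
  rewrite /= hornerD hornerM hornerXn.
  have /eqP -> := hroot i; by rewrite mulr0 add0r.
have := key hinj hsz hm hroot hw0 hf.
have E i : f.[sigma i] / (p %/ ('X - (sigma i)%:P)).[sigma i]
    = sigma i ^+ k * (sigma i + a) / D.
  have sa : sigma i + a != 0.
    by apply/eqP => Z; move: (hw i); rewrite Z mulr0 => /esym/eqP; rewrite (negbTE hD).
  have := hw0 i; rewrite hfs -(hw i); move: (p %/ _).[_] => w wn.
  by field; rewrite sa wn.
move=> hsum; rewrite (eq_bigr _ (fun i _ => E i)) -mulr_suml in hsum.
have PE : power_sum sigma k.+1 - a * power_sum sigma k = D * f`_q.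
  rewrite -hsum [D * _]mulrC divfK // /power_sum mulr_sumr -sumrB; apply: eq_bigr => i _.
  by rewrite -[in RHS](oppr_pchar2 h2 a) exprSr; ring.
rewrite -coefq_eq0 // (_ : (f`_q == 0) = (D * f`_q == 0)); last by rewrite mulf_eq0 (negbTE hD).
rewrite -PE subr_eq0.
by split => /eqP.
Qed.
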